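(* Let $G=(F\cup C,E)$ be a finite bipartite graph with $F\neq\emptyset$ and no isolated vertices. In one iteration of FacilitySelect on $G$, the expected number of edges removed is at least $\sqrt{|E|}$.
   Context: Let $G=(F\cup C,E)$ be a finite bipartite graph with parts $F$ (facilities) and $C$ (clients). The facility graph $G_F=(F,E_F)$ has an edge $\{i,i'\}$ ($i\ne i'$) iff $i$ and $i'$ have a common neighbor in $G$. Write $\deg(\cdot)$, $N(\cdot)$ for degree/neighborhood in $G$, $\deg_F(\cdot)$, $N_F(\cdot)$ for those in $G_F$. One iteration of FacilitySelect: every $i\in F$ independently draws $r_i$ uniformly from $[0,1]$; let $I=\{i\in F: r_i>\max_{i'\in N_F(i)} r_{i'}\}$ (the maximum over the empty set being $-\infty$); then all vertices of $I\cup N(I)$ are deleted from $G$ together with all their incident edges. ''Clients removed'' are the clients in $N(I)$; ''edges removed'' are the edges incident to deleted vertices. FacilitySelect repeats iterations while $F\ne\emptyset$. *)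

(* Defs.v *)
From HB Require Import structures.
From mathcomp Require Import all_boot all_order all_algebra.
From mathcomp Require Import perm.
Set Implicit Arguments. Unset Strict Implicit. Unset Printing Implicit Defensive.
Import Order.TTheory GRing.Theory Num.Theory.

(* A finite bipartite graph G = (F ∪ C, E) is given by finite types F
   (facilities) and C (clients) and an adjacency relation adj : F -> C -> bool;
   the edge set is E = {(i,c) | adj i c}. *)

Definition edges (F C : finType) (adj : F -> C -> bool) : {set F * C} :=
  [set p | adj p.1 p.2].

Definition facadj (F C : finType) (adj : F -> C -> bool) (i i' : F) : bool :=
  (i != i') && [exists c, adj i c && adj i' c].

(* The random values r_i are modelled by a uniformly random permutation s of F
   (the relative order of i.i.d. continuous values is a uniform random ordering;
   ties have probability 0). *)
Definition rk (F : finType) (s : {perm F}) (i : F) : nat := enum_rank (s i).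

Definition selected (F C : finType) (adj : F -> C -> bool) (s : {perm F}) : {set F} :=
  [set i | [forall i', facadj adj i i' ==> (rk s i' < rk s i)%N]].

Definition removed_edges (F C : finType) (adj : F -> C -> bool) (s : {perm F})
  : {set F * C} :=
  [set p in edges adj |
     (p.1 \in selected adj s) || [exists i, (i \in selected adj s) && adj i p.2]].

Definition expected_removed (R : numFieldType) (F C : finType) (adj : F -> C -> bool) : R :=
  (\sum_(s : {perm F}) (#|removed_edges adj s|)%:R) / (#|{perm F}|)%:R.

(* Main.v *)
Require Import Defs.
From HB Require Import structures.
From mathcomp Require Import all_boot all_order all_algebra.
From mathcomp Require Import perm.
Import Order.TTheory GRing.Theory Num.Theory.
Set Implicit Arguments. Unset Strict Implicit.

Definition Smax (F : finType) (A : {set F}) (j : F) : {set {perm F}} :=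
  [set s : {perm F} | [forall k in A, (k != j) ==> (rk s k < rk s j)%N]].

Lemma rk_inj (F : finType) (s : {perm F}) : injective (rk s).
Proof. move=> x y h; apply: (@perm_inj _ s); apply: enum_rank_inj; apply: val_inj; exact: h. Qed.

Lemma Smax_le (F : finType) (A : {set F}) j1 j2 :
  j1 \in A -> j2 \in A -> (#|Smax A j1| <= #|Smax A j2|)%N.
Proof.
move=> h1 h2.
rewrite -(card_imset (Smax A j1) (@mulgI _ (tperm j1 j2))).
apply: subset_leq_card; apply/subsetP => _ /imsetP [s hs ->].
rewrite inE; apply/forallP => k; apply/implyP => hk; apply/implyP => hkj2.
move: hs; rewrite inE => /forallP /(_ (tperm j1 j2 k)) /implyP.
rewrite /rk !permM tpermR.
have -> : tperm j1 j2 k \in A by case: tpermP => // ->.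
have -> : tperm j1 j2 k != j1.
  by rewrite -{2}(tpermR j1 j2) (inj_eq (@perm_inj _ _)).
by move/(_ isT)/implyP/(_ isT).
Qed.

Lemma Smax_sum (F : finType) (A : {set F}) i : i \in A ->
  (\sum_(j in A) #|Smax A j| = #|{perm F}|)%N.
Proof.
move=> hi.
have -> : (\sum_(j in A) #|Smax A j| = \sum_(j in A) \sum_s (s \in Smax A j))%N.
  by apply: eq_bigr => j _; rewrite cardE -sum1_size big_enum big_mkcond /=;
     apply: eq_bigr => s _; case: (s \in _).
rewrite exchange_big /= [RHS]cardE -sum1_size big_enum /=.
apply: eq_bigr => s _.
case: (arg_maxnP (rk s) hi) => j0 hj0 hmax.
have hs0 : s \in Smax A j0.
  rewrite inE; apply/forallP => k; apply/implyP => hk; apply/implyP => hkj.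
  rewrite ltn_neqAle; apply/andP; split; last exact: hmax.
  apply: contra hkj => /eqP h.
  by apply/eqP; apply: (@rk_inj _ s).
rewrite (bigD1 j0) //= hs0 big1 // => j /andP [hj hjj0].
suff -> : (s \in Smax A j) = false by [].
apply/negbTE; rewrite inE; apply/negP => /forallP /(_ j0) /implyP /(_ hj0).
rewrite eq_sym hjj0 /= => h.
move: (hmax j hj) => H; move: h; rewrite ltnNge => /negP; apply; exact: H.
Qed.

Lemma Smax_card (F : finType) (A : {set F}) i : i \in A ->
  (#|Smax A i| * #|A| = #|{perm F}|)%N.
Proof.
move=> hi; rewrite -(Smax_sum hi) mulnC -sum_nat_const.
apply: eq_bigr => j hj; apply/eqP; rewrite eqn_leq.
by rewrite !Smax_le.
Qed.

Definition Nb (F C : finType) (adj : F -> C -> bool) (i : F) : {set F} :=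
  [set j | [exists c, adj i c && adj j c]].
Definition Mb (F C : finType) (adj : F -> C -> bool) (i : F) : {set F * C} :=
  [set p in edges adj | adj i p.2].

Lemma sel_eq (F C : finType) (adj : F -> C -> bool) s i :
  (i \in selected adj s) = (s \in Smax (Nb adj i) i).
Proof.
rewrite !inE; apply/forallP/forallP => h j; move: (h j);
rewrite /facadj /Nb !inE (eq_sym j i); case: (i == j); case: [exists c, _]; case: (_ < _)%N. all: try done.
Qed.

Lemma iN (F C : finType) (adj : F -> C -> bool) i :
  (exists c, adj i c) -> i \in Nb adj i.
Proof. by case=> c hc; rewrite inE; apply/existsP; exists c; rewrite hc. Qed.

Lemma NleM (F C : finType) (adj : F -> C -> bool) i :
  (#|Nb adj i| <= #|Mb adj i|)%N.
Proof.
apply: (leq_trans _ (leq_imset_card fst _)); apply: subset_leq_card.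
apply/subsetP => j; rewrite inE => /existsP [c /andP [h1 h2]].
by apply/imsetP; exists (j, c) => //; rewrite !inE /= h1 h2.
Qed.

Lemma sumM  (F C : finType) (adj : F -> C -> bool) :
  (#|edges adj| <= \sum_i #|Mb adj i|)%N.
Proof.
rewrite cardE -sum1_size big_enum /= big_mkcond /=.
have -> : (\sum_i #|Mb adj i| = \sum_i \sum_p (p \in Mb adj i))%N.
  by apply: eq_bigr => j _; rewrite cardE -sum1_size big_enum big_mkcond /=;
     apply: eq_bigr => s _; case: (s \in _).
rewrite exchange_big /=. apply: leq_sum => p _.
case hp: (p \in edges adj) => //.
rewrite (bigD1 p.1) //= inE hp /=.
by move: hp; rewrite inE => ->.
Qed.

Lemma rem_ge (F C : finType) (adj : F -> C -> bool) s :
  (\sum_(i in selected adj s) #|Mb adj i| <= #|removed_edges adj s|)%N.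
Proof.
have -> : (\sum_(i in selected adj s) #|Mb adj i|
   = \sum_(i in selected adj s) \sum_p (p \in Mb adj i))%N.
  by apply: eq_bigr => j _; rewrite cardE -sum1_size big_enum big_mkcond /=;
     apply: eq_bigr => s' _; case: (s' \in _).
rewrite exchange_big /= [X in (_ <= X)%N]cardE -sum1_size big_enum /= [X in (_ <= X)%N]big_mkcond /=.
apply: leq_sum => p _.
case: (boolP [exists i, (i \in selected adj s) && (p \in Mb adj i)]).
  move=> /existsP [i0 /andP [hi0 hp0]].
  have -> : p \in removed_edges adj s.
    move: hp0; rewrite !inE => /andP [-> h] /=.
    by apply/orP; right; apply/existsP; exists i0; rewrite hi0.
  rewrite (bigD1 i0) //= hp0 big1 // => j /andP [hj hji0].
  suff -> : (p \in Mb adj j) = false by [].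
  apply/negP => hpj.
  move: hp0 hpj; rewrite !inE => /andP [_ h0] /andP [_ hj'].
  have hf : facadj adj j i0 by rewrite /facadj hji0; apply/existsP; exists p.2; rewrite h0 hj'.
  have hf' : facadj adj i0 j by rewrite /facadj eq_sym hji0; apply/existsP; exists p.2; rewrite h0 hj'.
  move: hj hi0; rewrite !inE => /forallP /(_ i0) /implyP /(_ hf) h1 /forallP /(_ j) /implyP /(_ hf') h2.
  by move: (ltn_trans h1 h2); rewrite ltnn.
move=> hn; rewrite big1 // => j hj.
suff -> : (p \in Mb adj j) = false by [].
apply/negP => hpj; move/negP: hn; apply; apply/existsP; exists j; by rewrite hj hpj.
Qed.

Lemma nat_main (F C : finType) (adj : F -> C -> bool)
  (hFiso : forall i : F, exists c : C, adj i c) :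
  let P := #|{perm F}| in
  let T := (\sum_(s : {perm F}) #|removed_edges adj s|)%N in
  let U := (\sum_i #|Smax (Nb adj i) i| * #|Mb adj i|)%N in
  [/\ (U <= T)%N, (#|F| * P <= U)%N & (P * #|edges adj| <= #|F| * U)%N].
Proof.
move=> P T U.
have hc : forall i, (#|Smax (Nb adj i) i| * #|Nb adj i| = P)%N.
  by move=> i; apply: Smax_card; apply: iN.
split.
- apply: (@leq_trans (\sum_s \sum_(i in selected adj s) #|Mb adj i|)); last first.
    by apply: leq_sum => s _; exact: rem_ge.
  rewrite (exchange_big_dep predT) //=; apply: leq_sum => i _.
  rewrite (eq_bigl (fun s => s \in Smax (Nb adj i) i)) ?sum_nat_const //.
  by move=> s; rewrite sel_eq.
- have -> : (#|F| * P = \sum_(i : F) P)%N by rewrite sum_nat_const.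
  apply: leq_sum => i _; rewrite -(hc i) leq_mul2l; apply/orP; right; exact: NleM.
- apply: (@leq_trans (P * \sum_i #|Mb adj i|)); first by rewrite leq_mul2l sumM orbT.
  rewrite /U !big_distrr /=; apply: leq_sum => i _.
  by rewrite -(hc i) -mulnA [X in (_ <= X)%N]mulnCA leq_mul2l leq_mul2r max_card !orbT.
Qed.

Local Open Scope ring_scope.

Theorem corollary1 (R : rcfType) (F C : finType) (adj : F -> C -> bool)
  (hF : (0 < #|F|)%N)
  (hFiso : forall i : F, exists c : C, adj i c)
  (hCiso : forall c : C, exists i : F, adj i c) :
  Num.sqrt (#|edges adj|%:R : R) <= expected_removed R adj.
Proof.
have [h1 h2 h3] := nat_main hFiso.
set P := #|{perm F}| in h2 h3 *.
set T := (\sum_(s : {perm F}) #|removed_edges adj s|)%N in h1.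
set U := (\sum_i _)%N in h1 h2 h3.
set E := #|edges adj| in h3 *.
have hP : (0 < P)%N by apply/card_gt0P; exists 1%g.
have hnat : (E * P ^ 2 <= T ^ 2)%N.
  have : (#|F| * (P * P * E) <= #|F| * (T * T))%N.
    apply: (@leq_trans ((#|F| * P) * (P * E))); first by rewrite !mulnA.
    apply: (@leq_trans (U * (#|F| * U))); first by apply: leq_mul; rewrite // mulnC.
    rewrite mulnCA leq_mul2l; apply/orP; right; exact: leq_mul.
  by rewrite leq_mul2l gtn_eqF //= mulnC.
rewrite /expected_removed -natr_sum -/T -/P.
have hy : 0 <= (T%:R / P%:R : R) by rewrite divr_ge0 ?ler0n.
rewrite -(ger0_norm hy) -sqrtr_sqr ler_sqrt ?sqr_ge0 //.
rewrite expr_div_n ler_pdivlMr ?exprn_gt0 ?ltr0n // -!natrX -natrM ler_nat.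
exact: hnat.
Qed.
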